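(* Let $q$ be a prime power, $S \subset \mathbb{F}_q^n$, $0 < \sigma < \tau$, and let $3 \le k \le n$ be an integer such that $E_{k-2}(S) \geq q$. Let $T \in \mathcal{L}_k(\mathbb{F}_q^n)$ be $\tau$-unbalanced with respect to $S$, and let $R$ be chosen uniformly at random from the set of $(k-2)$-flats contained in $T$. Then $$\Pr[R \text{ is } \sigma\text{-unbalanced with respect to } S] \geq 1 - \frac{1+\tau}{(\tau-\sigma)^2 q}.$$
   Context: $\mathcal{L}_j(\mathbb{F}_q^n)$ denotes the set of $j$-dimensional affine subspaces ($j$-flats) of $\mathbb{F}_q^n$. For $S \subset \mathbb{F}_q^n$, $E_j(S) = |S|/q^{n-j}$. A flat $R \in \mathcal{L}_j(\mathbb{F}_q^n)$ is $\sigma$-balanced with respect to $S$ if $\big||R \cap S| - E_j(S)\big| \leq \sigma E_j(S)$, and $\sigma$-unbalanced otherwise. *)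

(* Defs.v *)
From HB Require Import structures.
From mathcomp Require Import all_boot all_order all_algebra.
Set Implicit Arguments. Unset Strict Implicit. Unset Printing Implicit Defensive.
Import Order.TTheory GRing.Theory Num.Theory.
Local Open Scope ring_scope.

(* Ambient space F_q^n is 'rV[F]_n for a finite field F with q = #|F|. *)

Definition is_flat (F : finFieldType) (n j : nat) (R : {set 'rV[F]_n}) : bool :=
  [exists a : 'rV[F]_n, exists B : 'M[F]_(j, n),
     (\rank B == j) && (R == [set a + u *m B | u : 'rV[F]_j])].

Definition flats (F : finFieldType) (n j : nat) : {set {set 'rV[F]_n}} :=
  [set R | is_flat j R].

Definition Ej (K : realFieldType) (F : finFieldType) (n j : nat)
  (S : {set 'rV[F]_n}) : K :=
  (#|S|%:R) / ((#|F| ^ (n - j))%:R).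

Definition balanced (K : realFieldType) (F : finFieldType) (n j : nat)
  (sigma : K) (S R : {set 'rV[F]_n}) : bool :=
  `| (#|R :&: S|%:R : K) - Ej K j S | <= sigma * Ej K j S.

Definition unbalanced (K : realFieldType) (F : finFieldType) (n j : nat)
  (sigma : K) (S R : {set 'rV[F]_n}) : bool :=
  ~~ balanced j sigma S R.

Definition prob_unbalanced_sub (K : realFieldType) (F : finFieldType)
  (n j : nat) (sigma : K) (S T : {set 'rV[F]_n}) : K :=
  (#|[set R in flats F n j | (R \subset T) && unbalanced j sigma S R]|%:R)
  / (#|[set R in flats F n j | R \subset T]|%:R).

(* Main.v *)
Require Import Defs.
From HB Require Import structures.
From mathcomp Require Import all_boot all_order all_algebra.
Import Order.TTheory GRing.Theory Num.Theory.
Local Open Scope ring_scope.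

Lemma card_flatset (F : finFieldType) (k p : nat) (b : 'rV[F]_k) (C : 'M[F]_(p, k)) :
  \rank C = p -> #|[set b + u *m C | u : 'rV_p]| = (#|F| ^ p)%N.
Proof.
move=> rC; rewrite card_imset; last first.
  move=> u v /addrI; apply: row_free_inj; by rewrite /row_free rC.
by rewrite card_mx mul1n.
Qed.

Lemma card_flat (F : finFieldType) (k p : nat) (Q : {set 'rV[F]_k}) :
  Q \in flats F k p -> #|Q| = (#|F| ^ p)%N.
Proof.
rewrite inE => /existsP[b /existsP[C /andP[/eqP rC /eqP ->]]].
exact: card_flatset.
Qed.

Lemma flat_transl (F : finFieldType) (k p : nat) (w : 'rV[F]_k) (Q : {set 'rV[F]_k}) :
  Q \in flats F k p -> [set x + w | x in Q] \in flats F k p.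
Proof.
rewrite !inE => /existsP[b /existsP[C /andP[rC /eqP ->]]].
apply/existsP; exists (b + w); apply/existsP; exists C; rewrite rC /=.
by rewrite -imset_comp; apply/eqP/eq_imset => u /=; rewrite addrAC.
Qed.

Lemma flat_lin (F : finFieldType) (k p : nat) (M : 'M[F]_k) (Q : {set 'rV[F]_k}) :
  M \in unitmx -> Q \in flats F k p -> [set x *m M | x in Q] \in flats F k p.
Proof.
move=> uM; rewrite !inE => /existsP[b /existsP[C /andP[rC /eqP ->]]].
apply/existsP; exists (b *m M); apply/existsP; exists (C *m M).
rewrite mxrankMfree ?row_free_unit // rC /=.
by rewrite -imset_comp; apply/eqP/eq_imset => u /=; rewrite mulmxDl mulmxA.
Qed.

Lemma mem_imset_can (T : finType) (h h' : T -> T) (Q : {set T}) x :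
  cancel h h' -> cancel h' h -> (x \in h @: Q) = (h' x \in Q).
Proof.
move=> c1 c2; rewrite -{1}(c2 x) mem_imset //; exact: can_inj c1.
Qed.
Arguments mem_imset_can {T h h' Q x}.

Lemma transport (F : finFieldType) (k p : nat) (h h' : 'rV[F]_k -> 'rV[F]_k)
  (P : {set 'rV[F]_k} -> bool) :
  cancel h h' -> cancel h' h ->
  (forall Q, Q \in flats F k p -> h @: Q \in flats F k p) ->
  (forall Q, Q \in flats F k p -> h' @: Q \in flats F k p) ->
  #|[set Q in flats F k p | P Q]| = #|[set Q in flats F k p | P (h @: Q)]|.
Proof.
move=> c1 c2 fh fh'.
have hQ (Q : {set 'rV[F]_k}) : h @: (h' @: Q) = Q.
  by rewrite -imset_comp (eq_imset _ (fun x => c2 x)) imset_id.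
have -> : [set Q in flats F k p | P Q] =
   (fun Q : {set 'rV[F]_k} => h @: Q) @: [set Q in flats F k p | P (h @: Q)].
  apply/setP => Q; rewrite inE; apply/andP/imsetP.
    case=> fQ PQ; exists (h' @: Q); last by rewrite hQ.
    by rewrite inE fh' // hQ PQ.
  case=> Q' /[!inE] /andP[fQ' PQ'] ->; split => //.

  by move: (fh Q'); rewrite !inE; apply.
apply: card_imset; apply: imset_inj; exact: can_inj c1.
Qed.
Lemma card_sep (T : finType) (A : {set T}) (P : pred T) :
  #|[set x in A | P x]| = (\sum_(x in A) (P x : nat))%N.
Proof.
rewrite -sum1_card (eq_bigl (fun x => (x \in A) && P x)); last by move=> x; rewrite inE.
by rewrite big_mkcondr; apply: eq_bigr => x _; case: (P x).
Qed.

Lemma sum_incidence (F : finFieldType) (k p : nat) (G : pred {set 'rV[F]_k}) :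
  (\sum_(x : 'rV[F]_k) #|[set Q in flats F k p | G Q && (x \in Q)]|)%N =
  (\sum_(Q in flats F k p | G Q) #|Q|)%N.
Proof.
rewrite (eq_bigr (fun x => \sum_(Q in flats F k p) (G Q && (x \in Q) : nat))%N);
  last by move=> x _; rewrite card_sep.
rewrite exchange_big [RHS]big_mkcondr.
apply: eq_bigr => Q _.
case: (G Q) => /=; last by rewrite big1.
by rewrite -sum1_card [RHS]big_mkcond; apply: eq_bigr => x _ /=; case: (x \in Q).
Qed.

Lemma Nx_const (F : finFieldType) (k p : nat) (x : 'rV[F]_k) :
  #|[set Q in flats F k p | x \in Q]| = #|[set Q in flats F k p | 0 \in Q]|.
Proof.
have c1 : cancel (fun v : 'rV[F]_k => v + x) (fun v => v - x) by move=> v; rewrite addrK.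
have c2 : cancel (fun v : 'rV[F]_k => v - x) (fun v => v + x) by move=> v; rewrite subrK.
rewrite (@transport F k p (fun v => v + x) (fun v => v - x)) //.
- by apply: eq_card => Q; rewrite !inE !(mem_imset_can c1 c2) subrr.
- by move=> Q; apply: flat_transl.
- by move=> Q; apply: flat_transl.
Qed.

Lemma Nxy_transl (F : finFieldType) (k p : nat) (x y : 'rV[F]_k) :
  #|[set Q in flats F k p | (x \in Q) && (y \in Q)]| =
  #|[set Q in flats F k p | (0 \in Q) && (y - x \in Q)]|.
Proof.
have c1 : cancel (fun v : 'rV[F]_k => v + x) (fun v => v - x) by move=> v; rewrite addrK.
have c2 : cancel (fun v : 'rV[F]_k => v - x) (fun v => v + x) by move=> v; rewrite subrK.
rewrite (@transport F k p (fun v => v + x) (fun v => v - x)) //.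
- by apply: eq_card => Q; rewrite !inE !(mem_imset_can c1 c2) subrr.
- by move=> Q; apply: flat_transl.
- by move=> Q; apply: flat_transl.
Qed.

Lemma Nz_lin (F : finFieldType) (k p : nat) (z z' : 'rV[F]_k) :
  z != 0 -> z' != 0 ->
  #|[set Q in flats F k p | (0 \in Q) && (z \in Q)]| =
  #|[set Q in flats F k p | (0 \in Q) && (z' \in Q)]|.
Proof.
move=> nz nz'.
have rz' : row_free z' by rewrite /row_free rank_rV nz'.
have rk : \rank (z' *m (pinvmx z' *m z)) = \rank z'.
  by rewrite mulmxA mulmxVp // mul1mx !rank_rV nz nz'.
have [g ug eg] := complete_unitmx rk.
move: eg; rewrite mulmxA mulmxVp // mul1mx => eg.
have c1 : cancel (fun v : 'rV[F]_k => v *m g) (fun v => v *m invmx g)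
  by move=> v; rewrite mulmxK.
have c2 : cancel (fun v : 'rV[F]_k => v *m invmx g) (fun v => v *m g)
  by move=> v; rewrite mulmxKV.
rewrite (@transport F k p (fun v => v *m g) (fun v => v *m invmx g)) //.
- apply: eq_card => Q; rewrite !inE !(mem_imset_can c1 c2) mul0mx.
  by rewrite eg mulmxK.
- by move=> Q; apply: flat_lin.
- by move=> Q; apply: flat_lin; rewrite unitmx_inv.
Qed.
Arguments card_flat {F k p Q}.
Arguments Nx_const {F k p}.
Arguments Nxy_transl {F k p}.
Arguments Nz_lin {F k p}.

From mathcomp Require Import zify.
From mathcomp.algebra_tactics Require Import ring lra.

Lemma card_rV (F : finFieldType) k : #|'rV[F]_k| = (#|F| ^ k)%N.
Proof. by rewrite card_mx mul1n. Qed.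

Lemma count_x (F : finFieldType) (p : nat) (x : 'rV[F]_p.+2) :
  (#|F| ^ 2 * #|[set Q in flats F p.+2 p | x \in Q]|)%N = #|flats F p.+2 p|.
Proof.
have q1 := card_finNzRing_gt1 F.
have e := @sum_incidence F p.+2 p predT.
have eL : (\sum_(y : 'rV[F]_p.+2) #|[set Q in flats F p.+2 p | predT Q && (y \in Q)]|)%N
   = (#|F| ^ p.+2 * #|[set Q in flats F p.+2 p | 0%R \in Q]|)%N.
  rewrite (eq_bigr (fun _ => #|[set Q in flats F p.+2 p | 0%R \in Q]|)).
    by rewrite sum_nat_const card_rV.
  by move=> y _; rewrite -(Nx_const y); apply: eq_card => Q; rewrite !inE.
have eR : (\sum_(Q in flats F p.+2 p | predT Q) #|Q|)%N = (#|flats F p.+2 p| * #|F| ^ p)%N.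
  rewrite (eq_bigr (fun _ => #|F| ^ p))%N; last first.
    by move=> Q /andP[fQ _]; rewrite (card_flat fQ).
  rewrite sum_nat_const (eq_card (B := flats F p.+2 p)) //.
  by move=> Q; rewrite unfold_in /= andbT.
move: e; rewrite eL eR Nx_const -[p.+2]addn2 expnD -mulnA mulnC => /eqP.
rewrite eqn_pmul2r ?expn_gt0 ?(ltn_trans _ q1) // => /eqP.
by rewrite mulnC.
Qed.
Arguments count_x {F p}.
Lemma count_xy (F : finFieldType) (p : nat) (x y : 'rV[F]_p.+2) :
  (#|F| ^ 4 * #|[set Q in flats F p.+2 p | (x \in Q) && (y \in Q)]|
    <= #|flats F p.+2 p| + (x == y) * (#|F| ^ 2 * #|flats F p.+2 p|))%N.
Proof.
have q1 := card_finNzRing_gt1 F.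
have hx := count_x x.
have [<-|nxy] := eqVneq x y.
  rewrite (eq_card (B := [set Q in flats F p.+2 p | x \in Q])); last first.
    by move=> Q; rewrite !inE andbb.
  rewrite /= mul1n; apply: leq_trans (leq_addl _ _); rewrite -hx mulnA -expnD.
  by rewrite (_ : 4 = 2 + 2)%N // expnD -mulnA hx.
rewrite /= mul0n addn0 Nxy_transl.
have nz : y - x != 0 by rewrite subr_eq0 eq_sym.
set z := y - x.
set c := #|[set Q in flats F p.+2 p | (0%R \in Q) && (z \in Q)]|.
set N0 := #|[set Q in flats F p.+2 p | 0%R \in Q]|.
have h0 := count_x (0 : 'rV[F]_p.+2); rewrite -/N0 in h0.
have e := @sum_incidence F p.+2 p (fun Q => 0%R \in Q).
have eR : (\sum_(Q in flats F p.+2 p | 0%R \in Q) #|Q|)%N = (N0 * #|F| ^ p)%N.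
  rewrite (eq_bigr (fun _ => #|F| ^ p))%N; last first.
    by move=> Q /andP[fQ _]; rewrite (card_flat fQ).
  rewrite sum_nat_const; congr (_ * _)%N.
  by apply: eq_card => Q; rewrite [RHS]inE.
have eL : (\sum_(w : 'rV[F]_p.+2) #|[set Q in flats F p.+2 p | (0%R \in Q) && (w \in Q)]|)%N
   = (N0 + (#|F| ^ p.+2).-1 * c)%N.
  rewrite (bigD1 0) //= (eq_card (B := [set Q in flats F p.+2 p | 0%R \in Q])); last first.
    by move=> Q; rewrite !inE andbb.
  rewrite (eq_bigr (fun _ => c)); last first.
    by move=> w nw; apply: Nz_lin.
  by rewrite sum_nat_const cardC1 card_rV.
rewrite eL eR -[p.+2]addn2 expnD in e.
have Kp : (0 < #|F| ^ p)%N by rewrite expn_gt0 (ltn_trans _ q1).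
move: (#|F| ^ p)%N e Kp => K e Kp.
have a2 : (4 <= #|F| ^ 2)%N by rewrite (_ : 4 = 2 ^ 2)%N // leq_exp2r.
rewrite -h0 (_ : 4 = 2 + 2)%N // expnD.
move: (#|F| ^ 2)%N e a2 => a e a2.
rewrite -mulnA leq_mul2l; apply/orP; right.
nia.
Qed.

Lemma img_flat (F : finFieldType) (n k p : nat) (a : 'rV[F]_n) (B : 'M[F]_(k, n))
  (Q : {set 'rV[F]_k}) :
  \rank B = k -> Q \in flats F k p -> [set a + u *m B | u in Q] \in flats F n p.
Proof.
move=> rB; rewrite !inE => /existsP[b /existsP[C /andP[/eqP rC /eqP ->]]].
apply/existsP; exists (a + b *m B); apply/existsP; exists (C *m B).
rewrite mxrankMfree ?rC ?eqxx /=; last by rewrite /row_free rB.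
by rewrite -imset_comp; apply/eqP/eq_imset => u /=; rewrite mulmxDl mulmxA addrA.
Qed.

Lemma preimg_flat (F : finFieldType) (n k p : nat) (a : 'rV[F]_n) (B : 'M[F]_(k, n))
  (R : {set 'rV[F]_n}) :
  R \in flats F n p -> R \subset [set a + u *m B | u : 'rV_k] ->
  exists2 Q, Q \in flats F k p & R = [set a + u *m B | u in Q].
Proof.
rewrite inE => /existsP[b /existsP[C /andP[/eqP rC /eqP eR]]] sRT.
have inT (v : 'rV_p) : exists c : 'rV_k, b + v *m C = a + c *m B.
  have : b + v *m C \in R by rewrite eR; apply: imset_f.
  by move/(subsetP sRT) => /imsetP[c _ ->]; exists c.
have [cb ecb] := inT 0; rewrite mul0mx addr0 in ecb.
have sCB : (C <= B)%MS.
  apply/row_subP => i; have [ci eci] := inT ('e_i).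
  rewrite rowE (_ : 'e_i *m C = (ci - cb) *m B) ?submxMl //.
  by apply: (addrI b); rewrite eci {1}ecb mulmxBl -addrA [cb *m B + _]addrC subrK.
set D := C *m pinvmx B.
have eC : D *m B = C by rewrite /D mulmxKpV.
have rD : \rank D = p.
  apply/eqP; rewrite eqn_leq rank_leq_row /= -{1}rC -eC; exact: mxrankM_maxl.
exists [set cb + v *m D | v : 'rV_p].
  by rewrite inE; apply/existsP; exists cb; apply/existsP; exists D; rewrite rD eqxx eqxx.
rewrite eR -imset_comp; apply: eq_imset => v /=.
by rewrite mulmxDl addrA -ecb -mulmxA eC.
Qed.

Lemma cardIsum (V : finType) (R A : {set V}) :
  #|R :&: A| = (\sum_(x in A) (x \in R : nat))%N.
Proof.
by rewrite -card_sep; apply: eq_card => x; rewrite !inE andbC.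
Qed.

Lemma sum1_nat (V : finType) (Fam : {set {set V}}) (A : {set V}) :
  (\sum_(R in Fam) #|R :&: A|)%N = (\sum_(x in A) #|[set R in Fam | x \in R]|)%N.
Proof.
rewrite (eq_bigr (fun R : {set V} => \sum_(x in A) (x \in R : nat))%N); last by move=> R _; apply: cardIsum.
rewrite exchange_big /=; apply: eq_bigr => x _; by rewrite card_sep.
Qed.

Lemma sum2_nat (V : finType) (Fam : {set {set V}}) (A : {set V}) :
  (\sum_(R in Fam) #|R :&: A| ^ 2)%N =
  (\sum_(x in A) \sum_(y in A) #|[set R in Fam | (x \in R) && (y \in R)]|)%N.
Proof.
rewrite (eq_bigr (fun R : {set V} => \sum_(x in A) \sum_(y in A) ((x \in R) && (y \in R) : nat))%N); last first.
  move=> R _; rewrite expnS expn1 cardIsum big_distrl /=; apply: eq_bigr => x _.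
  rewrite big_distrr /=; apply: eq_bigr => y _.
  by case: (x \in R); case: (y \in R).
rewrite exchange_big /=; apply: eq_bigr => x _.
rewrite exchange_big /=; apply: eq_bigr => y _.
by rewrite card_sep.
Qed.

Lemma variance (K : realFieldType) (V : finType) (Fam : {set {set V}}) (A : {set V}) (r : nat) :
  (0 < r)%N ->
  (forall x, x \in A -> (r * #|[set R in Fam | x \in R]|)%N = #|Fam|) ->
  (forall x y, x \in A -> y \in A ->
     (r ^ 2 * #|[set R in Fam | (x \in R) && (y \in R)]|
       <= #|Fam| + (x == y) * (r * #|Fam|))%N) ->
  \sum_(R in Fam) ((#|R :&: A|%:R - #|A|%:R / r%:R) ^+ 2 : K)
    <= #|Fam|%:R * (#|A|%:R / r%:R).
Proof.
move=> r0 h1 h2.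
have s1 : (r * \sum_(R in Fam) #|R :&: A|)%N = (#|A| * #|Fam|)%N.
  rewrite sum1_nat big_distrr /= (eq_bigr (fun _ => #|Fam|)); last by move=> x xA; apply: h1.
  by rewrite sum_nat_const.
have s2 : (r ^ 2 * \sum_(R in Fam) #|R :&: A| ^ 2 <= #|A| ^ 2 * #|Fam| + #|A| * (r * #|Fam|))%N.
  rewrite sum2_nat big_distrr /=.
  apply: (@leq_trans (\sum_(x in A) \sum_(y in A) (#|Fam| + (x == y) * (r * #|Fam|)))%N).
    apply: leq_sum => x xA; rewrite big_distrr /=; apply: leq_sum => y yA; exact: h2.
  rewrite (eq_bigr (fun x => #|A| * #|Fam| + r * #|Fam|))%N; last first.
    move=> x xA; rewrite big_split /= sum_nat_const.
    rewrite (bigD1 x) //= eqxx mul1n big1 ?addn0 //.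
    by move=> y /andP[_ /negbTE]; rewrite eq_sym => ->.
  by rewrite sum_nat_const mulnDr mulnA expnS expn1.
have rK : (r%:R : K) != 0 by rewrite pnatr_eq0 -lt0n.
set X := fun R : {set V} => #|R :&: A|.
have e1 : \sum_(R in Fam) ((X R)%:R : K) = #|A|%:R * #|Fam|%:R / r%:R.
  by rewrite -natr_sum -natrM -s1 natrM mulrC mulKf.
have e2 : \sum_(R in Fam) ((X R)%:R ^+ 2 : K) <= (#|A|%:R ^+ 2 * #|Fam|%:R + #|A|%:R * (r%:R * #|Fam|%:R)) / r%:R ^+ 2.
  rewrite ler_pdivlMr ?exprn_gt0 ?ltr0n // mulrC.
  rewrite (eq_bigr (fun R => ((X R ^ 2)%N)%:R)); last by move=> R _; rewrite natrX.
  rewrite -natr_sum -!natrX -!natrM -natrD ler_nat; exact: s2.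
set mu := #|A|%:R / r%:R.
rewrite (eq_bigr (fun R => ((X R)%:R ^+ 2 + (- (2 * mu)) * (X R)%:R) + mu ^+ 2)); last first.
  by move=> R _; rewrite /X; ring.
rewrite !big_split /= -mulr_sumr sumr_const e1 -mulr_natr.
apply: (le_trans (lerD (lerD e2 (lexx _)) (lexx _))).
rewrite le_eqVlt; apply/orP; left; apply/eqP; rewrite /mu.
by field.
Qed.

Lemma cheb_final (K : realFieldType) (I : finType) (Fam : {set I}) (X : I -> K)
  (mu E sigma tau qq : K) :
  0 < sigma -> sigma < tau -> 0 < qq -> qq <= E -> tau * E < `|mu - E| ->
  \sum_(i in Fam) (X i - mu) ^+ 2 <= #|Fam|%:R * mu ->
  (0 < #|Fam|)%N ->
  1 - (1 + tau) / ((tau - sigma) ^+ 2 * qq) <=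
    #|[set i in Fam | ~~ (`|X i - E| <= sigma * E)]|%:R / #|Fam|%:R.
Proof.
move=> s0 st q0 qE hD hV N0.
set B := [set i in Fam | `|X i - E| <= sigma * E].
have hc : addn #|B| #|[set i in Fam | ~~ (`|X i - E| <= sigma * E)]| = #|Fam|.
  rewrite -(cardsID [set i | `|X i - E| <= sigma * E] Fam).
  by congr addn; apply: eq_card => i; rewrite !inE // andbC.
set D := `|mu - E|.
have E0 : 0 < E by apply: lt_le_trans qE.
have d0 : 0 < D - sigma * E.
  by rewrite subr_gt0; apply: le_lt_trans hD; rewrite ler_pM2r // ltW.
have hB : #|B|%:R * (D - sigma * E) ^+ 2 <= #|Fam|%:R * mu.
  apply: le_trans hV.
  rewrite (bigID (fun i => i \in B)) /= -[X in X <= _]addr0.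
  apply: lerD; last by apply: sumr_ge0 => i _; apply: sqr_ge0.
  have hb i : i \in B -> (D - sigma * E) ^+ 2 <= (X i - mu) ^+ 2.
    rewrite inE => /andP[_ hb].
    have h1 : D - sigma * E <= `|X i - mu|.
      have h := ler_distD (X i) mu E; rewrite [`|mu - X i|]distrC in h; rewrite lerBlDr.
      by apply: le_trans h _; rewrite lerD2l.
    rewrite -(real_normK (num_real (X i - mu))).
    by apply: lerXn2r => //; rewrite nnegrE ?normr_ge0 ?(ltW d0).
  rewrite (eq_bigl (fun i => i \in B)); last first.
    move=> i; apply/idP/idP => [/andP[]//|iB].
    by rewrite iB andbT; move: iB; rewrite inE => /andP[].
  apply: le_trans (ler_sum _ hb).
  by rewrite sumr_const mulr_natl.
have mD : mu <= E + D.
  by rewrite -lerBlDl; apply: ler_norm.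
have N0' : (0 : K) < #|Fam|%:R by rewrite ltr0n.
set N := #|Fam|%:R in hB hV N0' *.
set b := #|B|%:R in hB.
have b0 : 0 <= b by rewrite /b ler0n.
have key : (E + D) * ((tau - sigma) ^+ 2 * E) <= (1 + tau) * (D - sigma * E) ^+ 2.
  have t0 : 0 < D - tau * E by rewrite subr_gt0.
  set t := D - tau * E in t0.
  have -> : D = tau * E + t by rewrite /t addrC subrK.
  have h1 : 0 <= t * (tau - sigma) * E * (2 + tau + sigma).
    rewrite !mulr_ge0 ?ltW // ?subr_gt0 //; lra.
  have h2 : 0 <= (1 + tau) * t ^+ 2 by rewrite mulr_ge0 ?sqr_ge0 //; lra.
  have -> : (1 + tau) * (tau * E + t - sigma * E) ^+ 2 =
     (E + (tau * E + t)) * ((tau - sigma) ^+ 2 * E) +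
     (t * (tau - sigma) * E * (2 + tau + sigma) + (1 + tau) * t ^+ 2) by ring.
  by rewrite lerDl addr_ge0.
set c := (tau - sigma) ^+ 2 in key *.
have c0 : 0 < c by rewrite /c exprn_gt0 // subr_gt0.
set d := D - sigma * E in key hB d0 *.
have p1 : b * d ^+ 2 * (c * E) <= N * mu * (c * E).
  by rewrite ler_pM2r // mulr_gt0.
have p2 : N * mu * (c * E) <= N * ((E + D) * (c * E)).
  by rewrite -mulrA ler_pM2l // ler_pM2r // mulr_gt0.
have p3 : N * ((E + D) * (c * E)) <= N * ((1 + tau) * d ^+ 2).
  by rewrite ler_pM2l.
have h4 : b * c * E <= N * (1 + tau).
  have d2 : 0 < d ^+ 2 by rewrite exprn_gt0.
  rewrite -(ler_pM2r d2).
  have := le_trans p1 (le_trans p2 p3).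
  by rewrite mulrAC -!mulrA.
have h5 : b * c * qq <= N * (1 + tau).
  apply: le_trans h4; rewrite -[b * c * qq]mulrA -[b * c * E]mulrA.
  by apply: ler_wpM2l => //; rewrite ler_pM2l.
have hu : #|[set i in Fam | ~~ (`|X i - E| <= sigma * E)]| = subn #|Fam| #|B|.
  by rewrite -hc addKn.
rewrite hu natrB; last by rewrite -hc leq_addr.
rewrite -/N -/b mulrBl divff ?gt_eqF // lerD2l lerN2.
rewrite ler_pdivrMr // mulrAC ler_pdivlMr ?mulr_gt0 //.
  by move: h5; rewrite /b /N /c; nra.
all: by rewrite subr_gt0.
Qed.

Lemma transfer (F : finFieldType) (n k p : nat) (a : 'rV[F]_n) (B : 'M[F]_(k, n))
  (P : {set 'rV[F]_n} -> bool) :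
  \rank B = k ->
  #|[set R in flats F n p | (R \subset [set a + u *m B | u : 'rV_k]) && P R]| =
  #|[set Q in flats F k p | P [set a + u *m B | u in Q]]|.
Proof.
move=> rB.
have inj : injective (fun u : 'rV[F]_k => a + u *m B).
  by move=> u v /addrI; apply: row_free_inj; rewrite /row_free rB.
have -> : [set R in flats F n p | (R \subset [set a + u *m B | u : 'rV_k]) && P R] =
  (fun Q : {set 'rV[F]_k} => [set a + u *m B | u in Q]) @:
     [set Q in flats F k p | P [set a + u *m B | u in Q]].
  apply/setP => R; rewrite inE; apply/andP/imsetP.
    case=> fR /andP[sRT PR]; have [Q fQ eR] := preimg_flat _ _ _ _ _ _ _ fR sRT.
    by exists Q => //; rewrite inE fQ -eR.
  case=> Q /[!inE] /andP[fQ PQ] ->; split.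
    have fQ' : Q \in flats F k p by rewrite inE.
    by have := img_flat F n k p a B Q rB fQ'; rewrite inE.
  rewrite PQ andbT; apply/subsetP => x /imsetP[u _ ->]; exact: imset_f.
by apply: card_imset; apply: imset_inj.
Qed.

Theorem mainTheorem11 (K : realFieldType) (F : finFieldType) (n k : nat)
  (S : {set 'rV[F]_n}) (sigma tau : K) (T : {set 'rV[F]_n}) :
  0 < sigma -> sigma < tau ->
  (3 <= k)%N -> (k <= n)%N ->
  (#|F|%:R : K) <= Ej K (k - 2) S ->
  T \in flats F n k ->
  unbalanced k tau S T ->
  1 - (1 + tau) / ((tau - sigma) ^+ 2 * #|F|%:R)
    <= prob_unbalanced_sub (k - 2) sigma S T.
Proof.
move=> s0 st k3 kn hE hT hU.
case: k k3 kn hE hT hU => [|[|p]] // k3 kn hE hT hU.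
have ek : (p.+2 - 2 = p)%N by rewrite subSS subSS subn0.
rewrite ek in hE *.
have q1 := card_finNzRing_gt1 F.
move: (hT); rewrite inE => /existsP[a /existsP[B /andP[/eqP rB /eqP eT]]].
have inj : injective (fun u : 'rV[F]_p.+2 => a + u *m B).
  by move=> u v /addrI; apply: row_free_inj; rewrite /row_free rB.
set A := T :&: S.
set Fam := [set R in flats F n p | R \subset T].
have tr (P : {set 'rV[F]_n} -> bool) : #|[set R in Fam | P R]| =
    #|[set Q in flats F p.+2 p | P [set a + u *m B | u in Q]]|.
  rewrite -(transfer _ _ _ _ a B P rB) -eT; apply: eq_card => R.
  by rewrite !inE andbA.
have cN : #|Fam| = #|flats F p.+2 p|.
  have := tr (fun _ => true).
  rewrite (eq_card (B := Fam)); last by move=> R; rewrite !inE andbT.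
  by move=> ->; apply: eq_card => Q; rewrite !inE andbT.
have memphi (u : 'rV[F]_p.+2) (Q : {set 'rV[F]_p.+2}) :
    (a + u *m B \in [set a + v *m B | v in Q]) = (u \in Q).
  by apply/imsetP/idP => [[v vQ /inj -> //]|uQ]; exists u.
have inT x : x \in A -> exists u : 'rV[F]_p.+2, x = a + u *m B.
  by rewrite inE eT => /andP[/imsetP[u _ ->] _]; exists u.
have r0 : (0 < #|F| ^ 2)%N by rewrite expn_gt0 (ltn_trans _ q1).
have h1 x : x \in A -> (#|F| ^ 2 * #|[set R in Fam | x \in R]|)%N = #|Fam|.
  move=> /inT[u ->]; rewrite tr (eq_card (B := [set Q in flats F p.+2 p | u \in Q])).
    by rewrite cN count_x.
  by move=> Q; rewrite !inE memphi.
have h2 x y : x \in A -> y \in A ->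
    ((#|F| ^ 2) ^ 2 * #|[set R in Fam | (x \in R) && (y \in R)]|
       <= #|Fam| + (x == y) * (#|F| ^ 2 * #|Fam|))%N.
  move=> /inT[u ->] /inT[v ->].
  rewrite tr (eq_card (B := [set Q in flats F p.+2 p | (u \in Q) && (v \in Q)])).
    by rewrite cN (inj_eq inj) -expnM; exact: count_xy.
  by move=> Q; rewrite !inE !memphi.
have hV := variance K _ Fam A _ r0 h1 h2.
set r := (#|F| ^ 2)%N in r0 h1 h2 hV.
set mu := #|A|%:R / r%:R in hV.
have rK : (r%:R : K) != 0 by rewrite pnatr_eq0 -lt0n.
have rp : (0 : K) < r%:R by rewrite ltr0n.
have hV' : \sum_(R in Fam) (#|R :&: S|%:R - mu) ^+ 2 <= #|Fam|%:R * mu.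
  apply: le_trans hV; rewrite le_eqVlt; apply/orP; left; apply/eqP.
  apply: eq_bigr => R; rewrite inE => /andP[_ sRT].
  by rewrite /A setIA (setIidPl sRT).
have eE : Ej K p.+2 S = r%:R * Ej K p S.
  rewrite /Ej (_ : (n - p = (n - p.+2) + 2)%N); last by lia.
  rewrite expnD natrM -/r; field.
  by rewrite rK /= pnatr_eq0 -lt0n expn_gt0 (ltn_trans _ q1).
have hD : tau * Ej K p S < `|mu - Ej K p S|.
  move: hU; rewrite /unbalanced /balanced -ltNge eE -/A.
  have -> : (#|A|%:R : K) = r%:R * mu by rewrite /mu mulrC mulfVK.
  rewrite -mulrBr normrM ger0_norm ?ltW // mulrCA ltr_pM2l //.
have q0 : (0 : K) < #|F|%:R by rewrite ltr0n (ltn_trans _ q1).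
have N0 : (0 < #|Fam|)%N.
  rewrite cN; apply/card_gt0P; exists [set 0 + u *m (pid_mx p : 'M[F]_(p, p.+2)) | u : 'rV_p].
  rewrite inE; apply/existsP; exists 0; apply/existsP; exists (pid_mx p).
  by rewrite rank_pid_mx ?eqxx // ltnW.
have := cheb_final K _ Fam (fun R => #|R :&: S|%:R) mu (Ej K p S) sigma tau (#|F|%:R)
  s0 st q0 hE hD hV' N0.
rewrite /prob_unbalanced_sub => h; apply: le_trans h _.
rewrite le_eqVlt; apply/orP; left; apply/eqP; congr (_%:R / _).
by apply: eq_card => R; rewrite !inE andbA.
Qed.
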